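(* Let $R\subseteq\{e,c,w\}$ and let $\{s_1,\ldots,s_n\}\cup\{x\Rightarrow\delta\}$ ($n\ge 1$) be a finite set of sequents. Then $\{s_1,\ldots,s_n\}\vdash_{\mathbf{NACCLL}^-_R}x\Rightarrow\delta\iff\ \vdash_{\mathbf{NACCLL}^-_R}x\circ(\tau(s_1)\circ(\tau(s_2)\circ\cdots(\tau(s_{n-1})\circ\tau(s_n))\cdots))\Rightarrow\delta$, and the same equivalence holds with $\mathbf{NACCLL}_R$ in place of $\mathbf{NACCLL}^-_R$.
   Context: Formulas: terms over a countably infinite set of variables in $\{\wedge,\vee,\cdot,\backslash,/,!,1,0\}$. Structures: elements of the free unital groupoid $(Fm^\circ,\circ,\varepsilon)$ generated by formulas ($\circ$ non-associative, $\varepsilon$ empty structure and unit). $k$ ranges over structures in the free unital groupoid generated by formulas $!a$ (including $\varepsilon$). A context $u$ is a structure with exactly one hole; $u(x)$ fills it. A sequent is $x\Rightarrow\delta$, $\delta$ a formula or the empty stoup $\epsilon$. For a structure $x$, $\rho(x)$ is the formula obtained by replacing each $\circ$ by $\cdot$ ($\rho(\varepsilon)=1$); $\theta(\epsilon)=0$ and $\theta(a)=a$ for formulas $a$; for $s=(x\Rightarrow\delta)$, $\tau(s)=!(\rho(x)\backslash\theta(\delta))$. $\mathbf{NACILL}^0$: initial sequents $a\Rightarrow a$, $\varepsilon\Rightarrow 1$, $0\Rightarrow\epsilon$; rules (premises / conclusion): (cut) $x\Rightarrow a$, $u(a)\Rightarrow\delta$ / $u(x)\Rightarrow\delta$; $(1\Rightarrow)$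 $u(\varepsilon)\Rightarrow\delta$ / $u(1)\Rightarrow\delta$; $(\Rightarrow 0)$ $x\Rightarrow\epsilon$ / $x\Rightarrow 0$; $(\backslash\Rightarrow)$ $x\Rightarrow a$, $u(b)\Rightarrow\delta$ / $u(x\circ(a\backslash b))\Rightarrow\delta$; $(\Rightarrow\backslash)$ $a\circ x\Rightarrow b$ / $x\Rightarrow a\backslash b$; $(/\Rightarrow)$ $x\Rightarrow a$, $u(b)\Rightarrow\delta$ / $u((b/a)\circ x)\Rightarrow\delta$; $(\Rightarrow/)$ $x\circ a\Rightarrow b$ / $x\Rightarrow b/a$; $(\cdot\Rightarrow)$ $u(a\circ b)\Rightarrow\delta$ / $u(a\cdot b)\Rightarrow\delta$; $(\Rightarrow\cdot)$ $x\Rightarrow a$, $y\Rightarrow b$ / $x\circ y\Rightarrow a\cdot b$; $(\wedge\Rightarrow)$ $u(a_i)\Rightarrow\delta$ / $u(a_1\wedge a_2)\Rightarrow\delta$; $(\Rightarrow\wedge)$ $x\Rightarrow a$, $x\Rightarrow b$ / $x\Rightarrow a\wedge b$; $(\vee\Rightarrow)$ $u(a)\Rightarrow\delta$, $u(b)\Rightarrow\delta$ / $u(a\vee b)\Rightarrow\delta$; $(\Rightarrow\vee)$ $x\Rightarrow a_i$ / $x\Rightarrow a_1\vee a_2$; $(!\Rightarrow)$ $u(a)\Rightarrow\delta$ / $u(!a)\Rightarrow\delta$; $(\Rightarrow!)$ $k\Rightarrow a$ / $k\Rightarrow !a$; $(kw)$ $u(\varepsilon)\Rightarrow\delta$ /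 $u(k)\Rightarrow\delta$; $(kc)$ $u(k\circ k)\Rightarrow\delta$ / $u(k)\Rightarrow\delta$; two-directional: $(ke)$ $u(k\circ y)\Rightarrow\delta\leftrightarrow u(y\circ k)\Rightarrow\delta$; $(ka1)$ $u((k\circ y)\circ z)\Rightarrow\delta\leftrightarrow u(k\circ(y\circ z))\Rightarrow\delta$; $(ka2)$ $u((x\circ y)\circ k)\Rightarrow\delta\leftrightarrow u(x\circ(y\circ k))\Rightarrow\delta$. $\mathbf{NACCLL}^-$: $\mathbf{NACILL}^0$ plus initial sequents ${\sim}(-a)\Rightarrow a$, $-({\sim}a)\Rightarrow a$, $({\sim}a)/b\Rightarrow a\backslash(-b)$, $a\backslash(-b)\Rightarrow({\sim}a)/b$, where ${\sim}a:=a\backslash 0$, $-a:=0/a$. $\mathbf{NACCLL}$: additionally ${\sim}a\Rightarrow -a$ and $-a\Rightarrow{\sim}a$. Structural rules: $(e)$ $u(x\circ y)\Rightarrow\delta$ / $u(y\circ x)\Rightarrow\delta$; $(c)$ $u(x\circ x)\Rightarrow\delta$ / $u(x)\Rightarrow\delta$; $(i)$ $u(\varepsilon)\Rightarrow\delta$ / $u(x)\Rightarrow\delta$; $(o)$ $x\Rightarrow\epsilon$ / $x\Rightarrow a$; $(w)$ means both $(i)$ and $(o)$. Subscript $R$ adds the rules in $R$. $\mathcal S\vdash s$: there is a derivation of $s$ whose leaves are initial sequents or members of $\mathcal S$; $\vdash s$ means $\emptyset\vdash s$. *)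

(* Defs.v *)
From Stdlib Require Import List.
Import ListNotations.

Inductive formula : Type :=
| Var  : nat -> formula
| Meet : formula -> formula -> formula
| Join : formula -> formula -> formula
| Prod : formula -> formula -> formula
| LDiv : formula -> formula -> formula      (* LDiv a b = a \ b *)
| RDiv : formula -> formula -> formula      (* RDiv b a = b / a *)
| Bang : formula -> formula
| One  : formula
| Zero : formula.

(** Free unital groupoid generated by formulas, in normal form:
    a structure is either the empty structure eps (None) or a
    non-empty binary tree of formulas (Some t).  Composition absorbs eps. *)
Inductive nstr : Type :=
| Leaf : formula -> nstr
| Node : nstr -> nstr -> nstr.

Definition str := option nstr.
Definition eps : str := None.
Definition fm (a : formula) : str := Some (Leaf a).

Definition scomp (x y : str) : str :=
  match x, y with
  | None, _ => y
  | _, None => x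
  | Some s, Some t => Some (Node s t)
  end.

Inductive ctx : Type :=
| Hole : ctx
| CL : ctx -> nstr -> ctx
| CR : nstr -> ctx -> ctx.

Fixpoint fill (u : ctx) (x : str) : str :=
  match u with
  | Hole => x
  | CL u' y => scomp (fill u' x) (Some y)
  | CR y u' => scomp (Some y) (fill u' x)
  end.

Fixpoint nbang (t : nstr) : Prop :=
  match t with
  | Leaf a => exists b, a = Bang b
  | Node l r => nbang l /\ nbang r
  end.

Definition is_k (x : str) : Prop :=
  match x with None => True | Some t => nbang t end.

(** Sequents x => delta; delta = None is the empty stoup. *)
Definition sequent : Type := (str * option formula)%type.

Fixpoint nrho (t : nstr) : formula :=
  match t with
  | Leaf a => a
  | Node l r => Prod (nrho l) (nrho r)
  end.

Definition rho (x : str) : formula :=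
  match x with None => One | Some t => nrho t end.

Definition theta (d : option formula) : formula :=
  match d with None => Zero | Some a => a end.

Definition tau (s : sequent) : formula := Bang (LDiv (rho (fst s)) (theta (snd s))).

Definition tau_fold (ss : list sequent) : str :=
  fold_right (fun s acc => scomp (fm (tau s)) acc) eps ss.

Definition neg_r (a : formula) : formula := LDiv a Zero.
Definition neg_l (a : formula) : formula := RDiv Zero a.

(** Structural rules that may be added: e, c, w (w = i and o). *)
Inductive srule : Type := Re | Rc | Rw.

Inductive system : Type := NACCLLminus | NACCLLfull.

Inductive initial : system -> sequent -> Prop :=
| in_id   : forall L a, initial L (fm a, Some a)
| in_one  : forall L, initial L (eps, Some One)
| in_zero : forall L, initial L (fm Zero, None)
| in_dn1  : forall L a, initial L (fm (neg_r (neg_l a)), Some a)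
| in_dn2  : forall L a, initial L (fm (neg_l (neg_r a)), Some a)
| in_ct1  : forall L a b, initial L (fm (RDiv (neg_r a) b), Some (LDiv a (neg_l b)))
| in_ct2  : forall L a b, initial L (fm (LDiv a (neg_l b)), Some (RDiv (neg_r a) b))
| in_cy1  : forall a, initial NACCLLfull (fm (neg_r a), Some (neg_l a))
| in_cy2  : forall a, initial NACCLLfull (fm (neg_l a), Some (neg_r a)).

Inductive prov (L : system) (R : srule -> bool) (S : sequent -> Prop)
  : sequent -> Prop :=
| p_hyp : forall s, S s -> prov L R S s
| p_init : forall s, initial L s -> prov L R S s
| p_cut : forall x a u d,
    prov L R S (x, Some a) -> prov L R S (fill u (fm a), d) ->
    prov L R S (fill u x, d)
| p_oneL : forall u d, prov L R S (fill u eps, d) -> prov L R S (fill u (fm One), d)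
| p_zeroR : forall x, prov L R S (x, None) -> prov L R S (x, Some Zero)
| p_ldivL : forall x a b u d,
    prov L R S (x, Some a) -> prov L R S (fill u (fm b), d) ->
    prov L R S (fill u (scomp x (fm (LDiv a b))), d)
| p_ldivR : forall a x b,
    prov L R S (scomp (fm a) x, Some b) -> prov L R S (x, Some (LDiv a b))
| p_rdivL : forall x a b u d,
    prov L R S (x, Some a) -> prov L R S (fill u (fm b), d) ->
    prov L R S (fill u (scomp (fm (RDiv b a)) x), d)
| p_rdivR : forall x a b,
    prov L R S (scomp x (fm a), Some b) -> prov L R S (x, Some (RDiv b a))
| p_prodL : forall u a b d,
    prov L R S (fill u (scomp (fm a) (fm b)), d) -> prov L R S (fill u (fm (Prod a b)), d)
| p_prodR : forall x y a b,
    prov L R S (x, Some a) -> prov L R S (y, Some b) ->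
    prov L R S (scomp x y, Some (Prod a b))
| p_meetL1 : forall u a1 a2 d,
    prov L R S (fill u (fm a1), d) -> prov L R S (fill u (fm (Meet a1 a2)), d)
| p_meetL2 : forall u a1 a2 d,
    prov L R S (fill u (fm a2), d) -> prov L R S (fill u (fm (Meet a1 a2)), d)
| p_meetR : forall x a b,
    prov L R S (x, Some a) -> prov L R S (x, Some b) -> prov L R S (x, Some (Meet a b))
| p_joinL : forall u a b d,
    prov L R S (fill u (fm a), d) -> prov L R S (fill u (fm b), d) ->
    prov L R S (fill u (fm (Join a b)), d)
| p_joinR1 : forall x a1 a2,
    prov L R S (x, Some a1) -> prov L R S (x, Some (Join a1 a2))
| p_joinR2 : forall x a1 a2,
    prov L R S (x, Some a2) -> prov L R S (x, Some (Join a1 a2))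
| p_bangL : forall u a d,
    prov L R S (fill u (fm a), d) -> prov L R S (fill u (fm (Bang a)), d)
| p_bangR : forall k a,
    is_k k -> prov L R S (k, Some a) -> prov L R S (k, Some (Bang a))
| p_kw : forall u k d,
    is_k k -> prov L R S (fill u eps, d) -> prov L R S (fill u k, d)
| p_kc : forall u k d,
    is_k k -> prov L R S (fill u (scomp k k), d) -> prov L R S (fill u k, d)
| p_ke1 : forall u k y d,
    is_k k -> prov L R S (fill u (scomp k y), d) -> prov L R S (fill u (scomp y k), d)
| p_ke2 : forall u k y d,
    is_k k -> prov L R S (fill u (scomp y k), d) -> prov L R S (fill u (scomp k y), d)
| p_ka1a : forall u k y z d,
    is_k k -> prov L R S (fill u (scomp (scomp k y) z), d) ->
    prov L R S (fill u (scomp k (scomp y z)), d)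
| p_ka1b : forall u k y z d,
    is_k k -> prov L R S (fill u (scomp k (scomp y z)), d) ->
    prov L R S (fill u (scomp (scomp k y) z), d)
| p_ka2a : forall u x y k d,
    is_k k -> prov L R S (fill u (scomp (scomp x y) k), d) ->
    prov L R S (fill u (scomp x (scomp y k)), d)
| p_ka2b : forall u x y k d,
    is_k k -> prov L R S (fill u (scomp x (scomp y k)), d) ->
    prov L R S (fill u (scomp (scomp x y) k), d)
| p_e : forall u x y d,
    R Re = true -> prov L R S (fill u (scomp x y), d) -> prov L R S (fill u (scomp y x), d)
| p_c : forall u x d,
    R Rc = true -> prov L R S (fill u (scomp x x), d) -> prov L R S (fill u x, d)
| p_i : forall u x d,
    R Rw = true -> prov L R S (fill u eps, d) -> prov L R S (fill u x, d)
| p_o : forall x a,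
    R Rw = true -> prov L R S (x, None) -> prov L R S (x, Some a).

(* Main.v *)
Require Import Defs.
From Stdlib Require Import List.

Fixpoint comp (u v : ctx) : ctx :=
  match u with
  | Hole => v
  | CL u' y => CL (comp u' v) y
  | CR y u' => CR y (comp u' v)
  end.

Lemma fill_comp : forall u v z, fill (comp u v) z = fill u (fill v z).
Proof. induction u; intros; simpl; try rewrite IHu; reflexivity. Qed.

Definition cR (x : str) : ctx := match x with None => Hole | Some t => CR t Hole end.
Definition cL (x : str) : ctx := match x with None => Hole | Some t => CL Hole t end.

Lemma scomp_eps_r : forall x, scomp x eps = x.
Proof. destruct x; reflexivity. Qed.
Lemma fill_cR : forall x z, fill (cR x) z = scomp x z.
Proof. destruct x; reflexivity. Qed.
Lemma fill_cL : forall x z, fill (cL x) z = scomp z x.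
Proof. destruct x; intros; simpl; [reflexivity | symmetry; apply scomp_eps_r]. Qed.

Lemma ctxT : forall k u z, scomp (fill u z) k = fill (comp (cL k) u) z.
Proof. intros. rewrite fill_comp, fill_cL. reflexivity. Qed.

Lemma is_k_scomp : forall x y, is_k x -> is_k y -> is_k (scomp x y).
Proof. intros [x|] [y|]; simpl; tauto. Qed.

Lemma is_k_tau : forall s, is_k (fm (tau s)).
Proof. intros s. exists (LDiv (rho (fst s)) (theta (snd s))). reflexivity. Qed.

Lemma is_k_tau_fold : forall ss, is_k (tau_fold ss).
Proof.
  induction ss as [|s ss IH]. exact I.
  change (is_k (scomp (fm (tau s)) (tau_fold ss))).
  apply is_k_scomp; [apply is_k_tau | exact IH].
Qed.

Lemma weak : forall L R S k y d, is_k k -> prov L R S (y, d) -> prov L R S (scomp y k, d).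
Proof.
  intros. rewrite <- fill_cR. apply p_kw; auto. rewrite fill_cR, scomp_eps_r. auto.
Qed.

Lemma contr : forall L R S k y d, is_k k ->
  prov L R S (scomp (scomp y k) k, d) -> prov L R S (scomp y k, d).
Proof.
  intros. rewrite <- fill_cR. apply p_kc; auto. rewrite fill_cR.
  apply (p_ka2a _ _ _ Hole); auto.
Qed.

Lemma move : forall L R S k, is_k k -> forall u v z d,
  prov L R S (fill v (fill u (scomp z k)), d) -> prov L R S (fill v (scomp (fill u z) k), d).
Proof.
  intros L R S k Hk u. induction u as [|u IH y|y u IH]; intros v z d H.
  - exact H.
  - change (prov L R S (fill v (scomp (scomp (fill u z) (Some y)) k), d)).
    apply p_ke1; auto. apply p_ka1a; auto.
    replace (fill v (scomp (scomp k (fill u z)) (Some y)))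
      with (fill (comp v (CL Hole y)) (scomp k (fill u z))) by (rewrite fill_comp; reflexivity).
    apply p_ke2; auto. apply IH. rewrite fill_comp. exact H.
  - change (prov L R S (fill v (scomp (scomp (Some y) (fill u z)) k), d)).
    apply p_ka2b; auto.
    replace (fill v (scomp (Some y) (scomp (fill u z) k)))
      with (fill (comp v (CR y Hole)) (scomp (fill u z) k)) by (rewrite fill_comp; reflexivity).
    apply IH. rewrite fill_comp. exact H.
Qed.

Lemma absorb : forall L R S k, is_k k -> forall u z d,
  prov L R S (scomp (fill u (scomp z k)) k, d) -> prov L R S (scomp (fill u z) k, d).
Proof.
  intros. apply contr; auto. rewrite <- (fill_cL k (scomp (fill u z) k)).
  apply move; auto. rewrite fill_cL. exact H0.
Qed.

Ltac ctxc c := rewrite ctxT; apply c; try assumption; rewrite <- ctxT; assumption.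

Lemma fwd : forall L R S S0 T, is_k T ->
  (forall s, S s -> prov L R S0 (scomp (fst s) T, snd s)) ->
  forall s, prov L R S s -> prov L R S0 (scomp (fst s) T, snd s).
Proof.
  intros L R S S0 T HT HS s H. induction H; cbn [fst snd] in *.
  - apply HS; auto.
  - destruct s. apply weak; auto. apply p_init; auto.
  - apply absorb; auto. rewrite ctxT. eapply p_cut. exact IHprov1. rewrite <- ctxT. exact IHprov2.
  - ctxc p_oneL.
  - apply p_zeroR; assumption.
  - replace (fill u (scomp x (fm (LDiv a b)))) with (fill (comp u (cL (fm (LDiv a b)))) x)
      by (rewrite fill_comp, fill_cL; reflexivity).
    apply absorb; auto. rewrite fill_comp, fill_cL, ctxT. apply p_ldivL; auto.
    rewrite <- ctxT; auto.
  - apply p_ldivR. apply (p_ka2a _ _ _ Hole); auto.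
  - replace (fill u (scomp (fm (RDiv b a)) x)) with (fill (comp u (cR (fm (RDiv b a)))) x)
      by (rewrite fill_comp, fill_cR; reflexivity).
    apply absorb; auto. rewrite fill_comp, fill_cR, ctxT. apply p_rdivL; auto.
    rewrite <- ctxT; auto.
  - apply p_rdivR. rewrite <- (fill_cL (fm a) (scomp x T)). apply p_ke1; auto.
    rewrite fill_cL. apply (p_ka1b _ _ _ Hole); auto. apply (p_ke2 _ _ _ Hole); auto.
  - ctxc p_prodL.
  - rewrite <- (fill_cL y x). apply absorb; auto. rewrite fill_cL.
    rewrite <- (fill_cR (scomp x T) y). apply absorb; auto. rewrite fill_cR.
    apply weak; auto. apply p_prodR; auto.
  - ctxc p_meetL1.
  - ctxc p_meetL2.
  - apply p_meetR; auto.
  - ctxc p_joinL.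
  - apply p_joinR1; auto.
  - apply p_joinR2; auto.
  - ctxc p_bangL.
  - apply p_bangR; [apply is_k_scomp; auto | auto].
  - ctxc p_kw.
  - ctxc p_kc.
  - ctxc p_ke1.
  - ctxc p_ke2.
  - ctxc p_ka1a.
  - ctxc p_ka1b.
  - ctxc p_ka2a.
  - ctxc p_ka2b.
  - ctxc p_e.
  - ctxc p_c.
  - ctxc p_i.
  - apply p_o; auto.
Qed.

Lemma id_rho : forall L R S y, prov L R S (y, Some (rho y)).
Proof.
  intros L R S [t|].
  - induction t.
    + apply p_init. apply in_id.
    + apply (p_prodR _ _ _ (Some t1) (Some t2)); auto.
  - apply p_init. apply in_one.
Qed.

Lemma hyp_base : forall L R S y d, prov L R S (scomp y (fm (tau (y,d))), d).
Proof.
  intros. rewrite <- fill_cR. unfold tau. cbn [fst snd]. apply p_bangL. rewrite fill_cR.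
  apply (p_ldivL _ _ _ y (rho y) (theta d) Hole). apply id_rho.
  destruct d; apply p_init; constructor.
Qed.

Lemma hyp_weak : forall L R S ss s y d, In s ss ->
  prov L R S (scomp y (fm (tau s)), d) -> prov L R S (scomp y (tau_fold ss), d).
Proof.
  intros L R S. induction ss as [|s0 ss IH]; intros s y d Hin H; [destruct Hin|].
  change (tau_fold (s0::ss)) with (scomp (fm (tau s0)) (tau_fold ss)).
  destruct Hin as [<-|Hin].
  - apply (p_ka2a _ _ _ Hole). apply is_k_tau_fold. cbn [fill].
    apply weak. apply is_k_tau_fold. exact H.
  - assert (E: forall z, fill (comp (cR y) (cL (tau_fold ss))) z = scomp y (scomp z (tau_fold ss)))
      by (intros; rewrite fill_comp, fill_cR, fill_cL; reflexivity).
    rewrite <- E. apply p_kw. apply is_k_tau. rewrite E.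
    change (scomp eps (tau_fold ss)) with (tau_fold ss). eapply IH; eauto.
Qed.

Lemma rho_left : forall L R S y u d,
  prov L R S (fill u y, d) -> prov L R S (fill u (fm (rho y)), d).
Proof.
  intros L R S [t|].
  - induction t; intros u d H.
    + exact H.
    + change (rho (Some (Node t1 t2))) with (Prod (nrho t1) (nrho t2)). apply p_prodL.
      specialize (IHt1 (comp u (cL (fm (nrho t2)))) d). rewrite !fill_comp, !fill_cL in IHt1.
      apply IHt1.
      specialize (IHt2 (comp u (cR (Some t1))) d). rewrite !fill_comp, !fill_cR in IHt2.
      apply IHt2. exact H.
  - intros u d H. apply p_oneL. exact H.
Qed.

Lemma tau_prov : forall L R S y d, prov L R S (y, d) -> prov L R S (eps, Some (tau (y, d))).
Proof.
  intros. unfold tau. cbn [fst snd]. apply p_bangR. exact I. apply p_ldivR.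
  change (scomp (fm (rho y)) eps) with (fill Hole (fm (rho y))). apply rho_left.
  destruct d; cbn [theta]. exact H. apply p_zeroR. exact H.
Qed.

Lemma bwd : forall L R S ss x d, (forall s, In s ss -> prov L R S (eps, Some (tau s))) ->
  prov L R S (scomp x (tau_fold ss), d) -> prov L R S (x, d).
Proof.
  intros L R S. induction ss as [|s0 ss IH]; intros x d Hs H.
  - change (tau_fold nil) with eps in H. rewrite scomp_eps_r in H. exact H.
  - apply IH. intros; apply Hs; right; auto.
    assert (E: forall z, fill (comp (cR x) (cL (tau_fold ss))) z = scomp x (scomp z (tau_fold ss)))
      by (intros; rewrite fill_comp, fill_cR, fill_cL; reflexivity).
    replace (scomp x (tau_fold ss)) with (fill (comp (cR x) (cL (tau_fold ss))) eps)
      by (rewrite E; reflexivity).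
    apply (p_cut _ _ _ eps (tau s0)). apply Hs; left; reflexivity.
    rewrite E. exact H.
Qed.

Lemma mono : forall L R S s, prov L R (fun _ => False) s -> prov L R S s.
Proof.
  intros. induction H;
  [ contradiction | eapply p_init | eapply p_cut | eapply p_oneL | eapply p_zeroR
  | eapply p_ldivL | eapply p_ldivR | eapply p_rdivL | eapply p_rdivR | eapply p_prodL
  | eapply p_prodR | eapply p_meetL1 | eapply p_meetL2 | eapply p_meetR | eapply p_joinL
  | eapply p_joinR1 | eapply p_joinR2 | eapply p_bangL | eapply p_bangR | eapply p_kw
  | eapply p_kc | eapply p_ke1 | eapply p_ke2 | eapply p_ka1a | eapply p_ka1b
  | eapply p_ka2a | eapply p_ka2b | eapply p_e | eapply p_c | eapply p_i | eapply p_o ];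
  eauto.
Qed.

Theorem gen : forall L R ss x d,
  prov L R (fun s => In s ss) (x, d) <-> prov L R (fun _ => False) (scomp x (tau_fold ss), d).
Proof.
  intros. split; intro H.
  - refine (fwd L R (fun s => In s ss) (fun _ => False) (tau_fold ss) (is_k_tau_fold ss) _ (x, d) H).
    intros [y d'] Hin. cbn [fst snd]. eapply hyp_weak. exact Hin. apply hyp_base.
  - apply (bwd L R _ ss). intros [y d'] Hin. apply tau_prov. apply p_hyp. exact Hin.
    apply mono. exact H.
Qed.

Theorem mainTheorem18 :
  forall (R : srule -> bool) (ss : list sequent) (x : str) (d : option formula),
    ss <> nil ->
    (prov NACCLLminus R (fun s => In s ss) (x, d) <->
     prov NACCLLminus R (fun _ => False) (scomp x (tau_fold ss), d)) /\
    (prov NACCLLfull R (fun s => In s ss) (x, d) <->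
     prov NACCLLfull R (fun _ => False) (scomp x (tau_fold ss), d)).
Proof. intros. split; apply gen. Qed.
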